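(* Let $\mathcal C=\{c_1,\ldots,c_m\}$ and $n\ge 1$. Suppose the manipulator has no information, i.e. the information set is $E=\mathcal F_n$, the set of all $n$-profiles of linear orders on $\mathcal C$. Then the Borda rule (with ties broken in the order $c_1\succ c_2\succ\cdots\succ c_m$) is immune to dominating manipulation: for every linear order $V_M$ on $\mathcal C$, no linear order $U$ on $\mathcal C$ dominates $V_M$.
   Context: Borda: each vote gives $m-i$ points to the alternative in its $i$-th position; the alternative with the highest total score wins, ties broken in favor of the alternative with the smallest index. There are $n$ non-manipulators and one manipulator with true preferences $V_M$ (a linear order). Given an information set $E$ (a set of $n$-profiles of the non-manipulators), a vote $U$ dominates a vote $V$ if for every $P\in E$, $r(P\cup\{U\})$ is ranked weakly above $r(P\cup\{V\})$ in $V_M$, and for some $P'\in E$, $r(P'\cup\{U\})$ is ranked strictly above $r(P'\cup\{V\})$ in $V_M$. Immunity means that for every $V_M$ no vote dominates $V_M$. *)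

(* Defs.v *)
From mathcomp Require Import all_boot all_order all_fingroup.
Set Implicit Arguments. Unset Strict Implicit. Unset Printing Implicit Defensive.

(* Candidates c_1..c_k are represented by 'I_k (c_{i+1} = i); we use k = m.+1
   candidates so that a winner always exists.  A linear order (vote) on the
   candidates is a permutation V : {perm 'I_k}, where V i is the candidate in
   position i (0-based; position 0 = top). *)

Definition vote k := {perm 'I_k}.

Definition pos k (V : vote k) (c : 'I_k) : nat := (V^-1)%g c.

(* Borda: position i (1-based) gets k - i points, i.e. 0-based p gets k-1-p *)
Definition borda_pts k (V : vote k) (c : 'I_k) : nat := k.-1 - pos V c.

Definition score k (P : seq (vote k)) (c : 'I_k) : nat :=
  \sum_(V <- P) borda_pts V c.

Definition borda_winner m (P : seq (vote m.+1)) : 'I_m.+1 :=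
  odflt ord0 [pick c : 'I_m.+1 | [forall d : 'I_m.+1,
      (score P d <= score P c) && ((score P d == score P c) ==> (c <= d))]].
(* the predicate has exactly one solution (the lowest-index maximiser), so the
   default ord0 is never used *)

Definition weakly_above k (V : vote k) (a b : 'I_k) : Prop := pos V a <= pos V b.
Definition strictly_above k (V : vote k) (a b : 'I_k) : Prop := pos V a < pos V b.

(* n-profiles of non-manipulators *)
Definition nprofile n k := {ffun 'I_n -> vote k}.
Definition prof_seq n k (P : nprofile n k) : seq (vote k) := [seq P i | i <- enum 'I_n].

Definition outcome n m (P : nprofile n m.+1) (U : vote m.+1) : 'I_m.+1 :=
  borda_winner (rcons (prof_seq P) U).

Definition dominates n m (E : nprofile n m.+1 -> Prop) (VM U V : vote m.+1) : Prop :=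
  (forall P, E P -> weakly_above VM (outcome P U) (outcome P V)) /\
  (exists P, E P /\ strictly_above VM (outcome P U) (outcome P V)).

(* Main.v *)
Require Import Defs.
From mathcomp Require Import all_boot all_order all_fingroup.
From mathcomp Require Import zify.
Set Implicit Arguments. Unset Strict Implicit. Unset Printing Implicit Defensive.

Lemma score_rcons k (s : seq (vote k)) V c :
  score (rcons s V) c = score s c + borda_pts V c.
Proof. by rewrite /score -cats1 big_cat big_seq1. Qed.

Lemma score_prof n k (g : nat -> vote k) c :
  score (prof_seq [ffun j : 'I_n => g (val j)]) c = \sum_(0 <= j < n) borda_pts (g j) c.
Proof.
rewrite /score /prof_seq big_map big_enum big_mkord /=.
by apply: eq_bigr => j _; rewrite ffunE.
Qed.

Lemma pos_inv k (f : 'I_k -> 'I_k) (fi : injective f) c : pos ((perm fi)^-1)%g c = f c.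
Proof. by rewrite /pos invgK permE. Qed.

Lemma pos_le m (V : vote m.+1) c : pos V c <= m.
Proof. by rewrite /pos -ltnS. Qed.

Lemma pts_eq m (V : vote m.+1) c : borda_pts V c = m - pos V c.
Proof. by []. Qed.

Definition Idv k : vote k := ((1 : {perm 'I_k})^-1)%g.
Definition Rvv k : vote k := ((perm (@rev_ord_inj k))^-1)%g.

Lemma pos_Id k c : pos (Idv k) c = c.
Proof. by rewrite /Idv /pos invgK perm1. Qed.
Lemma pos_Rv m c : pos (Rvv m.+1) c = m - c.
Proof. by rewrite /Rvv pos_inv /= subSS. Qed.

Definition pairf k (j : nat) : vote k := if odd j then Idv k else Rvv k.

Lemma pairs_sum m s r c :
  \sum_(s <= j < s + r.*2) borda_pts (pairf m.+1 j) c = r * m.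
Proof.
elim: r => [|r IH]; first by rewrite addn0 big_geq.
rewrite doubleS !addnS !big_nat_recr /=; try lia.
rewrite IH /pairf /=.
case: (odd (s + r.*2)) => /=; rewrite !pts_eq !pos_Id !pos_Rv; have := ltn_ord c; lia.
Qed.

Lemma winner_spec m (P : seq (vote m.+1)) d :
  score P d <= score P (borda_winner P) /\
  (score P d = score P (borda_winner P) -> borda_winner P <= d).
Proof.
set M := \max_(c : 'I_m.+1) score P c.
have HM : forall c, score P c <= M by move=> c; apply: leq_bigmax.
pose key (c : 'I_m.+1) := (M - score P c) * m.+1 + c.
have [c0 _ Hc0] := @arg_minnP _ ord0 predT key isT.
have Hp : [forall d : 'I_m.+1,
      (score P d <= score P c0) && ((score P d == score P c0) ==> (c0 <= d))].
  apply/forallP => e; have := Hc0 e isT; rewrite /key.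
  have := HM e; have := HM c0; have := ltn_ord e; have := ltn_ord c0.
  move=> h1 h2 h3 h4 h5.
  case: (ltnP (score P c0) (score P e)) => h6.
    exfalso.
    have h7 : (M - score P e).+1 * m.+1 <= (M - score P c0) * m.+1.
      apply: leq_mul => //; lia.
    rewrite mulSn in h7; lia.
  rewrite /=; apply/implyP => /eqP h8.
  rewrite h8 in h5; lia.
rewrite /borda_winner; case: pickP => [w /forallP Hw | /(_ c0)]; last by rewrite Hp.
have := Hw d => /andP [-> /implyP H] /=; split=> // h; apply: H; exact/eqP.
Qed.


Definition tau (b : bool) (m i pd p : nat) : nat :=
  if p == pd then (if b then 1 else 0) else if p == i then (if b then 0 else 1)
  else if p < i then m - p else if p < pd then p - i + 1 else p - i.

Lemma tau_cases b m i pd p : i < pd -> p <= m ->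
  (p = pd /\ tau b m i pd p = (if b then 1 else 0)) \/
  (p = i /\ tau b m i pd p = (if b then 0 else 1)) \/
  (p < i /\ tau b m i pd p + p = m) \/
  (i < p < pd /\ tau b m i pd p + i = p + 1) \/
  (pd < p /\ tau b m i pd p + i = p).
Proof. rewrite /tau => h hm; repeat case: ifP; lia. Qed.

Lemma tau_inj b m i pd p1 p2 : i < pd -> pd <= m -> p1 <= m -> p2 <= m ->
  tau b m i pd p1 = tau b m i pd p2 -> p1 = p2.
Proof.
move=> h h0 h1 h2; have := @tau_cases b m i pd p1 h h1; have := @tau_cases b m i pd p2 h h2.
case: b => /=; lia.
Qed.

Lemma tau_vote m (VM : vote m.+1) b i pd : i < pd <= m ->
  exists W : vote m.+1, forall c, pos W c = tau b m i pd (pos VM c).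
Proof.
move=> hi.
have hb : forall c, tau b m i pd (pos VM c) < m.+1.
  move=> c; have := pos_le VM c; have := @tau_cases b m i pd (pos VM c) (proj1 (andP hi)) (pos_le VM c).
  case: b => /=; lia.
pose f (c : 'I_m.+1) : 'I_m.+1 := inord (tau b m i pd (pos VM c)).
have fi : injective f.
  move=> c1 c2 /(congr1 (@nat_of_ord _)); rewrite /f !inordK // => h.
  have h2 : pos VM c1 = pos VM c2.
    exact: (tau_inj (proj1 (andP hi)) (proj2 (andP hi)) (pos_le VM c1) (pos_le VM c2) h).
  by apply: (@perm_inj _ (VM^-1)%g); apply: val_inj.
exists ((perm fi)^-1)%g => c; by rewrite pos_inv /f inordK.
Qed.

Lemma rev_vote m (VM : vote m.+1) :
  exists Y : vote m.+1, forall c, pos Y c = m - pos VM c.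
Proof.
pose f (c : 'I_m.+1) : 'I_m.+1 := rev_ord ((VM^-1)%g c).
have fi : injective f by move=> c1 c2 /rev_ord_inj /perm_inj.
by exists ((perm fi)^-1)%g => c; rewrite pos_inv /f /= subSS.
Qed.


Lemma odd_prof m n r (W : vote m.+1) : n = r.*2.+1 ->
  exists K, exists P : nprofile n m.+1, forall V c,
    score (rcons (prof_seq P) V) c = borda_pts W c + K + borda_pts V c.
Proof.
move=> hn; exists (r * m).
pose g j := if j == 0 then W else pairf m.+1 j.
exists [ffun j : 'I_n => g (val j)] => V c.
rewrite score_rcons score_prof hn big_ltn //= (_ : r.*2.+1 = 1 + r.*2) // -(pairs_sum 1 r c).
congr (_ + _ + _); apply: eq_big_nat => j /andP [hj _].
by case: j hj.
Qed.

Lemma even_prof m n r (W Y : vote m.+1) : n = r.*2.+2 ->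
  exists K, exists P : nprofile n m.+1, forall V c,
    score (rcons (prof_seq P) V) c = borda_pts W c + borda_pts Y c + K + borda_pts V c.
Proof.
move=> hn; exists (r * m).
pose g j := if j == 0 then W else if j == 1 then Y else pairf m.+1 j.
exists [ffun j : 'I_n => g (val j)] => V c.
rewrite score_rcons score_prof hn big_ltn //= big_ltn //= (_ : r.*2.+2 = 2 + r.*2) // -(pairs_sum 2 r c) addnA.
congr (_ + _ + _); apply: eq_big_nat => j /andP [hj _].
by case: j hj => [|[|j]].
Qed.


Lemma first_diff m (VM U : vote m.+1) : U != VM ->
  exists i : 'I_m.+1, U i != VM i /\ forall j : 'I_m.+1, j < i -> U j = VM j.
Proof.
move=> hne.
have [j0 hj0] : exists j, U j != VM j.
  apply/existsP; apply: contraNT hne => /existsPn h.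
  by apply/eqP/permP => x; apply/eqP; have := h x; rewrite negbK.
case: (@arg_minnP _ j0 (fun j => U j != VM j) val hj0) => i hi hmin.
exists i; split=> // j hj; apply/eqP; apply: contraTT hj => h.
by rewrite -leqNgt; apply: hmin.
Qed.

Section Facts.
Variables (m : nat) (VM U : vote m.+1) (i : 'I_m.+1).
Hypothesis hi : U i != VM i.
Hypothesis hlt : forall j : 'I_m.+1, j < i -> U j = VM j.

Lemma f_above c : pos VM c < i -> pos U c = pos VM c.
Proof.
rewrite /pos => h; have := hlt h; rewrite permKV => e.
by rewrite -{1}e permK.
Qed.

Lemma f_above2 c : pos U c < i -> pos VM c = pos U c.
Proof.
rewrite /pos => h; have := hlt h; rewrite permKV => e.
by rewrite {1}e permK.
Qed.

Lemma f_posa : pos VM (VM i) = i.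
Proof. by rewrite /pos permK. Qed.
Lemma f_posd : pos U (U i) = i.
Proof. by rewrite /pos permK. Qed.

Lemma f_isa c : pos VM c = i -> c = VM i.
Proof. by rewrite /pos => h; rewrite -(permKV VM c); congr (VM _); apply: val_inj. Qed.

Lemma f_isd c : pos VM c = pos VM (U i) -> c = U i.
Proof. by rewrite /pos => h; apply: (@perm_inj _ (VM^-1)%g); apply: val_inj. Qed.

Lemma f_Ua : i < pos U (VM i).
Proof.
rewrite ltnNge leq_eqVlt; apply/negP => /orP [/eqP h | h].
  have e : (U^-1)%g (VM i) = i by apply: val_inj.
  by move/eqP: hi; apply; rewrite -{1}e permKV.
by have := f_above2 h; rewrite f_posa => h2; move: h; rewrite -h2 ltnn.
Qed.

Lemma f_VMd : i < pos VM (U i).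
Proof.
rewrite ltnNge leq_eqVlt; apply/negP => /orP [/eqP h | h].
  have e : (VM^-1)%g (U i) = i by apply: val_inj.
  by move/eqP: hi; apply; rewrite -{2}e permKV.
by have := f_above h; rewrite f_posd => h2; move: h; rewrite h2 ltnn.
Qed.

Lemma f_notabove c : i <= pos VM c -> i <= pos U c.
Proof.
move=> h; rewrite leqNgt; apply/negP => h2.
by have := f_above2 h2 => h3; move: h; rewrite h3 leqNgt h2.
Qed.

Lemma f_ne : nat_of_ord (U i) <> nat_of_ord (VM i).
Proof. by move=> h; move/eqP: hi; apply; apply: val_inj. Qed.

Lemma cfacts c :
  let p := pos VM c in let q := pos U c in
  p <= m /\ q <= m /\ (p < i -> q = p) /\ (i <= p -> i <= q) /\
  (p = i -> nat_of_ord c = nat_of_ord (VM i) /\ q = pos U (VM i)) /\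
  (p = pos VM (U i) -> nat_of_ord c = nat_of_ord (U i) /\ q = i).
Proof.
rewrite /=; split; first exact: pos_le.
split; first exact: pos_le.
split; first by move=> h; apply: f_above.
split; first by move=> h; apply: f_notabove.
split; first by move=> /f_isa ->.
by move=> /f_isd ->; rewrite f_posd.
Qed.

End Facts.


Lemma tau_i b m i pd : i < pd -> tau b m i pd i = (if b then 0 else 1).
Proof. by rewrite /tau => h; rewrite (ltn_eqF h) eqxx. Qed.
Lemma tau_pd b m i pd : tau b m i pd pd = (if b then 1 else 0).
Proof. by rewrite /tau eqxx. Qed.

Lemma tau_lt b m i pd p : i < pd -> p < i -> tau b m i pd p = m - p.
Proof. rewrite /tau => h1 h2; repeat case: ifP; lia. Qed.

Ltac spec P V HP HW e :=
  move: (winner_spec (rcons (prof_seq P) V) e); rewrite !HP !pts_eq !HW.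

Lemma core m n (hn : 0 < n) (VM U : vote m.+1) : U != VM ->
  exists P : nprofile n m.+1, pos VM (outcome P VM) < pos VM (outcome P U).
Proof.
move=> hne; have [i [hi hlt]] := first_diff hne.
have hUa := f_Ua hi hlt; have hVMd := f_VMd hi hlt; have hne' := f_ne hi.
have hpa := f_posa VM i; have hpd' := f_posd U i.
have hpd : i < pos VM (U i) <= m by rewrite hVMd pos_le.
have hil : i < pos VM (U i) by [].
have CF := cfacts hlt.
have T1 := tau_i true m hil; have T2 := tau_i false m hil.
have T3 := tau_pd true m i (pos VM (U i)); have T4 := tau_pd false m i (pos VM (U i)).
simpl in T1, T2, T3, T4.
have [W2 HW2] := tau_vote VM true hpd.
case/boolP: (odd n) => hodd.
- have hn' : n = (n./2).*2.+1 by have := odd_double_half n; rewrite hodd; lia.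
  have [W1 HW1] := tau_vote VM false hpd.
  have [K1 [P1 HP1]] := odd_prof W1 hn'.
  have [K2 [P2 HP2]] := odd_prof W2 hn'.
  rewrite /outcome.
  have A1 : pos VM (borda_winner (rcons (prof_seq P1) U)) = pos VM (U i).
    spec P1 U HP1 HW1 (U i) => -[s1 s2].
    have /= := CF (borda_winner (rcons (prof_seq P1) U)).
    have := @tau_cases false m i _ (pos VM (borda_winner (rcons (prof_seq P1) U))) hil (pos_le _ _).
    rewrite hpd' T4 in s1 s2 *; lia.
  case: (ltnP (pos VM (borda_winner (rcons (prof_seq P1) VM))) (pos VM (U i))) => hB.
    by exists P1; rewrite A1.
  exists P2.
  have C1 : pos VM (borda_winner (rcons (prof_seq P1) VM)) = pos VM (U i) /\
            nat_of_ord (borda_winner (rcons (prof_seq P1) VM)) = nat_of_ord (U i) /\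
            pos VM (U i) = i.+1 /\ nat_of_ord (U i) < nat_of_ord (VM i).
    spec P1 VM HP1 HW1 (VM i) => -[s1 s2].
    have /= := CF (borda_winner (rcons (prof_seq P1) VM)).
    have := @tau_cases false m i _ (pos VM (borda_winner (rcons (prof_seq P1) VM))) hil (pos_le _ _).
    rewrite hpa T2 in s1 s2 *; lia.
  have C2 : pos VM (borda_winner (rcons (prof_seq P2) VM)) = i.
    spec P2 VM HP2 HW2 (VM i) => -[s1 s2].
    have /= := CF (borda_winner (rcons (prof_seq P2) VM)).
    have := @tau_cases true m i _ (pos VM (borda_winner (rcons (prof_seq P2) VM))) hil (pos_le _ _).
    rewrite hpa T1 in s1 s2 *; lia.
  rewrite C2.
  set w2 := borda_winner (rcons (prof_seq P2) U).
  have hv : nat_of_ord w2 = nat_of_ord (U i) -> pos VM w2 = pos VM (U i).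
    by move=> h; congr pos; apply: val_inj.
  case: (ltngtP (pos VM w2) i) => hp //.
  + spec P2 U HP2 HW2 (U i) => -[s1 s2]; rewrite -/w2 in s1 s2.
    spec P1 VM HP1 HW1 w2 => -[t1 t2].
    have /= := CF w2.
    rewrite (tau_lt true m hil hp) in s1 s2; rewrite (tau_lt false m hil hp) in t1 t2.
    move: C1 t1 t2; set w1 := borda_winner (rcons (prof_seq P1) VM) => C1 t1 t2.
    have e1 : pos VM w1 = pos VM (U i) by case: C1.
    rewrite e1 T4 in t1 t2; rewrite hpd' T3 in s1 s2.
    lia.
  + spec P2 U HP2 HW2 (U i) => -[s1 s2]; rewrite -/w2 in s1 s2.
    have /= := CF w2.
    rewrite hp T1 in s1 s2; rewrite hpd' T3 in s1 s2.
    lia.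
- have hn' : n = (n./2).-1.*2.+2 by have := odd_double_half n; rewrite (negbTE hodd); lia.
  have [Y HY] := rev_vote VM.
  have sK : forall c, m - (m - pos VM c) = pos VM c := fun c => subKn (pos_le VM c).
  have [K [P HP]] := even_prof W2 Y hn'.
  exists P; rewrite /outcome.
  have C2 : pos VM (borda_winner (rcons (prof_seq P) VM)) = i.
    spec P VM HP HW2 (VM i) => -[s1 s2]; rewrite !HY !sK in s1 s2.
    have /= := CF (borda_winner (rcons (prof_seq P) VM)).
    have := @tau_cases true m i _ (pos VM (borda_winner (rcons (prof_seq P) VM))) hil (pos_le _ _).
    rewrite hpa T1 in s1 s2 *; lia.
  rewrite C2.
  spec P U HP HW2 (U i) => -[s1 s2]; rewrite !HY !sK in s1 s2.
  have /= := CF (borda_winner (rcons (prof_seq P) U)).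
  have := @tau_cases true m i _ (pos VM (borda_winner (rcons (prof_seq P) U))) hil (pos_le _ _).
  rewrite hpd' T3 in s1 s2 *; lia.
Qed.


Theorem theorem2 (m n : nat) (hn : 0 < n) :
  forall VM U : vote m.+1, ~ dominates (fun _ : nprofile n m.+1 => True) VM U VM.
Proof.
move=> VM U [Hw [P [_ Hs]]].
case: (eqVneq U VM) => [e | hne].
  by move: Hs; rewrite e /strictly_above ltnn.
have [P0 HP0] := core hn hne.
have := Hw P0 I; rewrite /weakly_above leqNgt.
by rewrite HP0.
Qed.
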